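(* Let $M$ be a matroid such that the 1-skeleton of $P(M)$ (equivalently, the base graph $G(M)$) is isomorphic to the graph of a $d$-dimensional hypercube. Then $P(M)$ is indecomposable.
   Context: For a matroid $N$ on $E=\{1,\dots,n\}$, $P(N)=\mathrm{conv}\{\sum_{i\in B}e_i : B \text{ a base of } N\}\subset\mathbb{R}^n$. The base graph $G(M)$ has the bases of $M$ as vertices, two bases adjacent iff their symmetric difference has exactly two elements. A matroid base polytope decomposition of $P(M)$ is an expression $P(M)=\bigcup_{i=1}^t P(M_i)$ with each $M_i$ a matroid on $E$ and $P(M_i)\cap P(M_j)$ a face of both $P(M_i)$ and $P(M_j)$ for all $i\neq j$. $P(M)$ is decomposable if it has such a decomposition with $t\ge 2$ and every $P(M_i)\neq P(M)$, and indecomposable otherwise. *)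

(* Defs.v *)
From HB Require Import structures.
From mathcomp Require Import all_boot all_order all_algebra.
Set Implicit Arguments. Unset Strict Implicit. Unset Printing Implicit Defensive.
Import Order.TTheory GRing.Theory Num.Theory.
Local Open Scope ring_scope.

Record matroid (n : nat) := Matroid {
  bases : {set {set 'I_n}};
  bases_nonempty : bases != set0;
  bases_exchange : forall B1 B2, B1 \in bases -> B2 \in bases ->
    forall x, x \in B1 :\: B2 ->
      exists2 y, y \in B2 :\: B1 & (y |: (B1 :\ x)) \in bases
}.

Definition indic (R : realFieldType) (n : nat) (B : {set 'I_n}) : 'rV[R]_n :=
  \row_i (i \in B)%:R.

Definition base_polytope (R : realFieldType) (n : nat) (N : matroid n)
    (x : 'rV[R]_n) : Prop :=
  exists lam : {set 'I_n} -> R,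
    [/\ forall B, 0 <= lam B,
        forall B, B \notin bases N -> lam B = 0,
        \sum_B lam B = 1
      & x = \sum_B lam B *: indic R B].

Arguments base_polytope R {n} N x.
Arguments indic R {n} B.

Definition dotv (R : realFieldType) (n : nat) (c x : 'rV[R]_n) : R :=
  \sum_i c ord0 i * x ord0 i.

(* F is a face of the polytope P: the intersection of P with a supporting
   hyperplane {c.x = d} where c.x <= d on P (allows the empty face and P). *)
Definition is_face (R : realFieldType) (n : nat) (P F : 'rV[R]_n -> Prop) : Prop :=
  exists (c : 'rV[R]_n) (d : R),
    (forall x, P x -> dotv c x <= d) /\
    (forall x, F x <-> (P x /\ dotv c x = d)).

Definition mbp_decomposition (R : realFieldType) (n : nat) (M : matroid n)
    (t : nat) (Ms : 'I_t -> matroid n) : Prop :=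
  (forall x, base_polytope R M x <-> exists i, base_polytope R (Ms i) x) /\
  (forall i j, i != j ->
     is_face (base_polytope R (Ms i))
             (fun x => base_polytope R (Ms i) x /\ base_polytope R (Ms j) x) /\
     is_face (base_polytope R (Ms j))
             (fun x => base_polytope R (Ms i) x /\ base_polytope R (Ms j) x)).

Definition decomposable (R : realFieldType) (n : nat) (M : matroid n) : Prop :=
  exists (t : nat) (Ms : 'I_t -> matroid n),
    [/\ (2 <= t)%N, @mbp_decomposition R n M t Ms
      & forall i, ~ (forall x, base_polytope R (Ms i) x <-> base_polytope R M x)].

Arguments decomposable R {n} M.

Definition indecomposable (R : realFieldType) (n : nat) (M : matroid n) : Prop :=
  ~ decomposable R M.

Definition base_adj (n : nat) (B1 B2 : {set 'I_n}) : bool :=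
  #|(B1 :\: B2) :|: (B2 :\: B1)| == 2%N.

Definition cube_adj (d : nat) (u v : {ffun 'I_d -> bool}) : bool :=
  #|[set i | u i != v i]| == 1%N.

Definition base_graph_is_cube (n : nat) (M : matroid n) (d : nat) : Prop :=
  exists phi : {ffun 'I_d -> bool} -> {set 'I_n},
    [/\ injective phi,
        forall B, B \in bases M <-> exists v, phi v = B
      & forall u v, base_adj (phi u) (phi v) = cube_adj u v].

(* Main.v *)
Require Import Defs.
From HB Require Import structures.
From mathcomp Require Import all_boot all_order all_algebra.
Set Implicit Arguments. Unset Strict Implicit. Unset Printing Implicit Defensive.

Lemma exch_sets n (B1 B2 : {set 'I_n}) x y : x \in B1 :\: B2 -> y \in B2 :\: B1 ->
  [/\ B1 :\: (y |: (B1 :\ x)) = [set x], (y |: (B1 :\ x)) :\: B1 = [set y],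
      (y |: (B1 :\ x)) :\: B2 = (B1 :\: B2) :\ x & base_adj B1 (y |: (B1 :\ x))].
Proof.
rewrite !inE => /andP[xB2 xB1] /andP[yB1 yB2].
have xy : x != y by apply/eqP=> E; move: xB1; rewrite E (negbTE yB1).
have yx : y != x by rewrite eq_sym.
move: xB2 yB1 => /negbTE xB2 /negbTE yB1.
have e1 : B1 :\: (y |: (B1 :\ x)) = [set x].
  by apply/setP=> z; rewrite !inE; case: (eqVneq z x) => [->|zx];
    [|case: (eqVneq z y) => [->|zy]];
    rewrite ?eqxx ?xB1 ?xB2 ?yB1 ?yB2 ?(negbTE xy) ?(negbTE yx) ?(negbTE zx) ?(negbTE zy) //=;
    case: (z \in B1); case: (z \in B2).
have e2 : (y |: (B1 :\ x)) :\: B1 = [set y].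
  by apply/setP=> z; rewrite !inE; case: (eqVneq z x) => [->|zx];
    [|case: (eqVneq z y) => [->|zy]];
    rewrite ?eqxx ?xB1 ?xB2 ?yB1 ?yB2 ?(negbTE xy) ?(negbTE yx) ?(negbTE zx) ?(negbTE zy) //=;
    case: (z \in B1); case: (z \in B2).
split => //.
  by apply/setP=> z; rewrite !inE; case: (eqVneq z x) => [->|zx];
    [|case: (eqVneq z y) => [->|zy]];
    rewrite ?eqxx ?xB1 ?xB2 ?yB1 ?yB2 ?(negbTE xy) ?(negbTE yx) ?(negbTE zx) ?(negbTE zy) //=;
    case: (z \in B1); case: (z \in B2).
by rewrite /base_adj e1 e2 cards2 xy.
Qed.

Lemma diff_empty_eq n (N : matroid n) B1 B2 : B1 \in bases N -> B2 \in bases N ->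
  B1 :\: B2 = set0 -> B1 = B2.
Proof.
move=> h1 h2 e.
have e' : B2 :\: B1 = set0.
  case: (set_0Vmem (B2 :\: B1)) => [//|[z hz]].
  have [y hy _] := bases_exchange h2 h1 hz.
  by rewrite e inE in hy.
apply/eqP; rewrite eqEsubset; apply/andP; split; rewrite -setD_eq0 ?e ?e' //.
Qed.

Lemma disj_card n (A B : {set 'I_n}) : A :&: B = set0 -> #|A :|: B| = #|A| + #|B|.
Proof. by move=> h; rewrite cardsU h cards0 subn0. Qed.

Lemma adj_diff1 n (N : matroid n) B1 B2 : B1 \in bases N -> B2 \in bases N ->
  base_adj B1 B2 -> #|B1 :\: B2| = 1%N.
Proof.
move=> h1 h2; rewrite /base_adj disj_card; last first.
  by apply/setP=> z; rewrite !inE; case: (z \in B1); case: (z \in B2); rewrite ?andbF.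
move=> /eqP hc.
have n1 : #|B1 :\: B2| != 0%N.
  apply/negP=> /eqP /cards0_eq /(diff_empty_eq h1 h2) E; move: hc.
  by rewrite E setDv cards0.
have n2 : #|B2 :\: B1| != 0%N.
  apply/negP=> /eqP /cards0_eq /(diff_empty_eq h2 h1) E; move: hc.
  by rewrite E setDv cards0.
move: hc n1 n2; case: #|B1 :\: B2| => [|[|[|k]]] //; case: #|B2 :\: B1| => [|[|k']] //.
Qed.

Definition ham d (u v : {ffun 'I_d -> bool}) := #|[set i | u i != v i]|.
Definition flip d (u : {ffun 'I_d -> bool}) k : {ffun 'I_d -> bool} :=
  [ffun i => if i == k then ~~ u k else u i].

Lemma flipK d (u : {ffun 'I_d -> bool}) k : flip (flip u k) k = u.
Proof. by apply/ffunP=> i; rewrite !ffunE eqxx; case: eqP => [->|]; rewrite ?negbK. Qed.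

Lemma ham_sym d (u v : {ffun 'I_d -> bool}) : ham u v = ham v u.
Proof. by rewrite /ham; apply: eq_card => i; rewrite !inE eq_sym. Qed.

Lemma ham_tri d (u w v : {ffun 'I_d -> bool}) : ham u v <= ham u w + ham w v.
Proof.
rewrite /ham; apply: leq_trans (leq_card_setU _ _); apply: subset_leq_card.
apply/subsetP=> i; rewrite !inE; by case: (u i); case: (w i); case: (v i).
Qed.

Lemma sdiff_tri n (A B C : {set 'I_n}) : #|A :\: C| <= #|A :\: B| + #|B :\: C|.
Proof.
apply: leq_trans (leq_card_setU _ _); apply: subset_leq_card.
apply/subsetP=> i; rewrite !inE; by case: (i \in A); case: (i \in B); case: (i \in C).
Qed.

Lemma ham0 d (u v : {ffun 'I_d -> bool}) : ham u v = 0 -> u = v.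
Proof.
move/cards0_eq=> E; apply/ffunP=> i; apply/eqP.
by move: E => /setP/(_ i); rewrite !inE; move/negbFE.
Qed.

Lemma ham_flip d (u v : {ffun 'I_d -> bool}) k : u k != v k ->
  ham u v = (ham (flip u k) v).+1.
Proof.
move=> h; rewrite /ham.
have -> : [set i | u i != v i] = k |: [set i | flip u k i != v i].
  apply/setP=> i; rewrite !inE ffunE; case: (eqVneq i k) => [->|ik]; first by rewrite ?eqxx ?h.
  by rewrite ?(negbTE ik).
by rewrite cardsU1 inE ffunE eqxx; move: h; case: (u k); case: (v k).
Qed.

Lemma ham_flip_same d (u v : {ffun 'I_d -> bool}) k : u k = v k ->
  ham (flip u k) v = (ham u v).+1.
Proof.
move=> h; rewrite (@ham_flip _ (flip u k) v k) ?flipK //.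
by rewrite ffunE eqxx h; case: (v k).
Qed.

Lemma adj_flip d (u : {ffun 'I_d -> bool}) k : cube_adj u (flip u k).
Proof.
rewrite /cube_adj.
have -> : [set i | u i != flip u k i] = [set k].
  apply/setP=> i; rewrite !inE ffunE; case: (eqVneq i k) => [->|ik]; last by rewrite eqxx.
  by case: (u k).
by rewrite cards1.
Qed.

Lemma adj_is_flip d (u v : {ffun 'I_d -> bool}) : cube_adj u v -> exists k, v = flip u k.
Proof.
move=> /cards1P [k hk]; exists k; apply/ffunP=> i; rewrite ffunE.
move: hk => /setP/(_ i); rewrite !inE.
case: (eqVneq i k) => [->|ik] /=.
  by case: (u k); case: (v k).
by move/negbFE/eqP.
Qed.

Lemma flip_flip_ham d (u v : {ffun 'I_d -> bool}) k :
  ham (flip v k) (flip u k) = ham v u /\ ham (flip v k) u = ham v (flip u k).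
Proof.
split; rewrite /ham; apply: eq_card => i; rewrite !inE !ffunE;
  case: (eqVneq i k) => [->|ik]; rewrite ?eqxx ?(negbTE ik) //; by case: (u k); case: (v k).
Qed.

Section Cube.
Variables (n d : nat) (M : matroid n) (phi : {ffun 'I_d -> bool} -> {set 'I_n}).
Hypothesis phi_inj : injective phi.
Hypothesis phi_on : forall B, B \in bases M <-> exists v, phi v = B.
Hypothesis phi_adj : forall u v, base_adj (phi u) (phi v) = cube_adj u v.

Lemma phi_base v : phi v \in bases M.
Proof. by apply/phi_on; exists v. Qed.

Lemma ex_diff (u v : {ffun 'I_d -> bool}) : 0 < ham u v -> exists k, u k != v k.
Proof.
case: (set_0Vmem [set i | u i != v i]) => [E|[k]]; first by rewrite /ham E cards0.
by rewrite inE => h _; exists k.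
Qed.

Lemma L3 u v : #|phi u :\: phi v| <= ham u v.
Proof.
move e : (ham u v) => m; elim: m u e => [|m IH] u e.
  by rewrite (ham0 e) setDv cards0.
have [k hk] : exists k, u k != v k by apply: ex_diff; rewrite e.
have e' := ham_flip hk; rewrite e in e'; case: e' => e'.
apply: leq_trans (sdiff_tri _ (phi (flip u k)) _) _.
rewrite (adj_diff1 (phi_base _) (phi_base _)) ?phi_adj ?adj_flip // add1n ltnS IH //.
Qed.

Lemma L4 u v : ham u v <= #|phi u :\: phi v|.
Proof.
move e : #|phi u :\: phi v| => m; elim: m u e => [|m IH] u e.
  have E := diff_empty_eq (phi_base u) (phi_base v) (cards0_eq e).
  rewrite (phi_inj E) leqn0 /ham cards_eq0; apply/eqP/setP => i; rewrite !inE eqxx.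
  by [].
have [x hx] : exists x, x \in phi u :\: phi v by apply/set0Pn; rewrite -card_gt0 e.
have [y hy hB] := bases_exchange (phi_base u) (phi_base v) hx.
have [u' hu'] := (phi_on _).1 hB.
have [e1 e2 e3 adj] := exch_sets hx hy.
rewrite -hu' in e1 e2 e3 adj.
apply: leq_trans (ham_tri u u' v) _.
have -> : ham u u' = 1%N by move: adj; rewrite phi_adj => /eqP.
rewrite add1n ltnS IH //.
move: (cardsD1 x (phi u :\: phi v)); rewrite hx e e3 add1n.
by case.
Qed.

Lemma dist u v : #|phi u :\: phi v| = ham u v.
Proof. by apply/eqP; rewrite eqn_leq L3 L4. Qed.

Variable N : matroid n.
Hypothesis sub : forall B, B \in bases N -> B \in bases M.

Lemma step s t k : phi s \in bases N -> phi t \in bases N -> s k != t k ->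
  phi (flip s k) \in bases N.
Proof.
move=> hs ht hk.
set A := phi s :\: phi t. set D := [set i | s i != t i].
set K := [set j in D | phi (flip s j) \in bases N].
have AD : #|A| = #|D| by rewrite /A dist.
have [x0 _] : exists x0, x0 \in A.
  by apply/set0Pn; rewrite -card_gt0 AD card_gt0; apply/set0Pn; exists k; rewrite inE.
pose h j := odflt x0 [pick z in phi s :\: phi (flip s j)].
have hK : forall j, phi s :\: phi (flip s j) = [set h j].
  move=> j; have /cards1P [z hz] : #|phi s :\: phi (flip s j)| == 1%N.
    by rewrite dist; exact: adj_flip.
  rewrite /h hz; case: pickP => [z' /set1P -> //| H].
  by have := H z; rewrite inE eqxx.
have sAK : A \subset h @: K.
  apply/subsetP => x hx.
  have [y hy hB] := bases_exchange hs ht hx.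
  have [s' hs'] := (phi_on _).1 (sub hB).
  have [e1 e2 e3 adj] := exch_sets hx hy.
  rewrite -hs' in e1 e2 e3 adj hB; rewrite phi_adj in adj.
  have [j ej] := adj_is_flip adj; subst s'.
  have hcard : #|A| = (#|A :\ x|).+1 by rewrite (cardsD1 x A) hx.
  have jD : j \in D.
    rewrite inE; apply/negP => /eqP sj.
    have := ham_flip_same sj; rewrite -!dist e3 -/A hcard.
    by move/eqP; rewrite -addn2 -{1}(addn0 #|A :\ x|) eqn_add2l.
  apply/imsetP; exists j; first by rewrite inE jD.
  by have := hK j; rewrite e1 => /setP/(_ x); rewrite !inE eqxx => /esym/eqP.
have KD : K \subset D by apply/subsetP=> j; rewrite inE => /andP[].
have KeD : K = D.
  apply/eqP; rewrite eqEcard KD -AD.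
  exact: leq_trans (subset_leq_card sAK) (leq_imset_card _ _).
have : k \in K by rewrite KeD inE.
by rewrite inE => /andP[].
Qed.

Lemma all_in s0 : phi s0 \in bases N ->
  (forall k, exists p q, [/\ phi p \in bases N, phi q \in bases N & p k != q k]) ->
  forall v, phi v \in bases N.
Proof.
move=> h0 H.
have fl : forall s k, phi s \in bases N -> phi (flip s k) \in bases N.
  move=> s k hs; have [p [q [hp hq pq]]] := H k.
  case: (eqVneq (s k) (p k)) => e.
    by apply: step hs hq _; rewrite e.
  exact: step hs hp e.
move=> v; move e : (ham s0 v) => m; elim: m s0 h0 e => [|m IH] s0 h0 e.
  by rewrite -(ham0 e).
have [k hk] : exists k, s0 k != v k by apply: ex_diff; rewrite e.
have e' := ham_flip hk; rewrite e in e'; case: e' => e'.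
by apply: (IH (flip s0 k)) => //; apply: fl.
Qed.

End Cube.

Import GRing.Theory Num.Theory.
Local Open Scope ring_scope.

Lemma coordE (R : realFieldType) n (lam : {set 'I_n} -> R) i :
  (\sum_B lam B *: indic R B) ord0 i = \sum_B lam B * (i \in B)%:R.
Proof. by rewrite summxE; apply: eq_bigr => B _; rewrite !mxE. Qed.

Lemma sum_ind (R : realFieldType) (T : finType) (A : {set T}) :
  \sum_i ((i \in A)%:R : R) = #|A|%:R.
Proof.
rewrite (eq_bigr (fun i => if i \in A then (1 : R) else 0)); last by move=> i _; case: (i \in A).
by rewrite -big_mkcond /= sumr_const.
Qed.

Lemma indic_in (R : realFieldType) n (N : matroid n) B : B \in bases N ->
  base_polytope R N (indic R B).
Proof.
move=> hB; exists (fun C => (C == B)%:R); split.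
- by move=> C; rewrite ler0n.
- by move=> C hC; case: eqP => // E; rewrite E hB in hC.
- by rewrite (bigD1 B) //= eqxx big1 ?addr0 // => C /negbTE ->.
- by rewrite (bigD1 B) //= eqxx scale1r big1 ?addr0 // => C /negbTE ->; rewrite scale0r.
Qed.

Lemma extreme (R : realFieldType) n (M : matroid n) B :
  base_polytope R M (indic R B) -> B \in bases M.
Proof.
move=> [lam [ge0 off s1 e]].
have coord : forall i, ((i \in B)%:R : R) = \sum_C lam C * (i \in C)%:R.
  by move=> i; rewrite -coordE -e mxE.
have key : forall C, lam C != 0 -> C = B.
  move=> C nz; apply/setP => i; case hi: (i \in B).
    have hs : \sum_C lam C * (1 - (i \in C)%:R) = 0.
      under eq_bigr do rewrite mulrBr mulr1.
      by rewrite sumrB s1 -coord hi subrr.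
    have hp : forall D, true -> 0 <= lam D * (1 - (i \in D)%:R).
      by move=> D _; apply: mulr_ge0 => //; case: (i \in D); rewrite ?subrr ?subr0.
    move: (psumr_eq0P hp hs (i:=C) isT) => /eqP; rewrite mulf_eq0 (negbTE nz) /=; case: (i \in C) => //.
    by rewrite subr0 oner_eq0.
  have hs : \sum_C lam C * (i \in C)%:R = 0 by rewrite -coord hi.
  have hp : forall D, true -> 0 <= lam D * (i \in D)%:R.
    by move=> D _; apply: mulr_ge0 => //; rewrite ler0n.
  move: (psumr_eq0P hp hs (i:=C) isT) => /eqP; rewrite mulf_eq0 (negbTE nz) /=; case: (i \in C) => //.
  by rewrite oner_eq0.
case: (boolP [exists C, lam C != 0]) => [/existsP [C nz]|/existsPn all0].
  rewrite -(key C nz); apply: contraR nz => /off ->; by rewrite eqxx.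
move: s1; rewrite big1 => [/eqP|C _]; first by rewrite eq_sym oner_eq0.
by apply/eqP; move: (all0 C); rewrite negbK.
Qed.

Lemma Lcomb (R : realFieldType) n (w : 'I_n -> R) (lam : {set 'I_n} -> R) :
  \sum_i w i * (\sum_B lam B *: indic R B) ord0 i =
  \sum_B lam B * \sum_i w i * (i \in B)%:R.
Proof.
under eq_bigr do rewrite coordE mulr_sumr.
rewrite exchange_big; apply: eq_bigr => B _; rewrite mulr_sumr.
by apply: eq_bigr => i _; rewrite mulrCA.
Qed.

Lemma Lind (R : realFieldType) n (B0 B1 B : {set 'I_n}) :
  \sum_i ((i \in B0)%:R - (i \in B1)%:R) * ((i \in B)%:R : R) =
  #|B :\: B1|%:R - #|B :\: B0|%:R.
Proof.
under eq_bigr do rewrite mulrBl -!natrM !mulnb.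
have hI : forall A : {set 'I_n}, \sum_i (((i \in A) && (i \in B))%:R : R) = #|B :&: A|%:R.
  by move=> A; rewrite -sum_ind; apply: eq_bigr => i _; rewrite inE andbC.
rewrite sumrB !hI.
have e0 : (#|B :&: B0|%:R : R) = #|B|%:R - #|B :\: B0|%:R by rewrite -(cardsID B0 B) natrD addrK.
have e1 : (#|B :&: B1|%:R : R) = #|B|%:R - #|B :\: B1|%:R by rewrite -(cardsID B1 B) natrD addrK.
by rewrite e0 e1 opprB addrC addrA subrK.
Qed.

Theorem corollary7 (R : realFieldType) (n : nat) (M : matroid n) (d : nat) :
  base_graph_is_cube M d -> indecomposable R M.
Proof.
move=> [phi [inj on adj]] [t [Ms [_ [cover _] neq]]].
pose c : R := #|bases M|%:R.
have c0 : c != 0 by rewrite pnatr_eq0 -lt0n card_gt0 bases_nonempty.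
pose lamM := fun B : {set 'I_n} => (B \in bases M)%:R / c.
pose x := \sum_B lamM B *: indic R B.
have xM : base_polytope R M x.
  exists lamM; split => //.
  - by move=> B; rewrite /lamM divr_ge0 ?ler0n.
  - by move=> B /negbTE hB; rewrite /lamM hB mul0r.
  - by rewrite /lamM -mulr_suml sum_ind divff.
have [i xi] := (cover x).1 xM.
have sub : forall B, B \in bases (Ms i) -> B \in bases M.
  by move=> B hB; apply: (extreme (R:=R)); apply/(cover _).2; exists i; apply: indic_in.
apply: (neq i).
suff eqb : bases (Ms i) = bases M by move=> y; rewrite /base_polytope eqb.
have [B0 hB0] : exists B0, B0 \in bases (Ms i) by apply/set0Pn; apply: bases_nonempty.
have [s0 hs0] := (on B0).1 (sub _ hB0).
rewrite -hs0 in hB0.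
apply/setP => Bx; apply/idP/idP; first exact: sub.
move/on => [v <-].
apply: (all_in inj on adj sub hB0) => k.
case: (boolP [exists v, (phi v \in bases (Ms i)) && (v k != s0 k)]).
  by move=> /existsP [q /andP [hq nq]]; exists q, s0; split.
move=> /existsPn allk; exfalso.
pose w := fun j : 'I_n => ((j \in phi s0)%:R - (j \in phi (flip s0 k))%:R : R).
pose g := fun v => ((ham v (flip s0 k))%:R - (ham v s0)%:R : R).
have Lv : forall v, \sum_j w j * (j \in phi v)%:R = g v.
  by move=> v'; rewrite /w Lind !(dist inj on adj).
have g0 : \sum_v g v = 0.
  have : \sum_v g v = - \sum_v g v.
    have finj : injective (fun v : {ffun 'I_d -> bool} => flip v k).
      exact: (@can_inj _ _ (fun v => flip v k) (fun v => flip v k) (fun u => @flipK d u k)).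
    rewrite [LHS](reindex_inj finj) /= -sumrN; apply: eq_bigr => v' _.
    by rewrite /g; case: (flip_flip_ham s0 v' k) => -> ->; rewrite opprB.
  move/eqP; rewrite -subr_eq0 opprK -mulr2n mulrn_eq0 /=.
  by move/eqP.
have EM : bases M = phi @: setT.
  apply/setP => B'; apply/idP/imsetP => [/on [v' <-]|[v' _ ->]]; first by exists v'.
  by apply/on; exists v'.
have Lx0 : \sum_j w j * x ord0 j = 0.
  rewrite /x Lcomb.
  rewrite (eq_bigr (fun B => c^-1 * ((B \in bases M)%:R * \sum_j w j * (j \in B)%:R))); last first.
    by move=> B _; rewrite /lamM mulrAC mulrC.
  rewrite -mulr_sumr.
  have -> : \sum_B (B \in bases M)%:R * \sum_j w j * (j \in B)%:R =
            \sum_(B in bases M) \sum_j w j * (j \in B)%:R.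
    by rewrite [RHS]big_mkcond; apply: eq_bigr => B _; case: (B \in bases M); rewrite ?mul1r ?mul0r.
  rewrite EM big_imset; last by move=> u1 u2 _ _; apply: inj.
  rewrite (eq_bigr _ (fun v' _ => Lv v')).
  rewrite (eq_bigl predT); first by rewrite g0 mulr0.
  by move=> v'; rewrite inE.
have Lx1 : \sum_j w j * x ord0 j = 1.
  case: xi => [lam [ge0 off s1 ex]]; rewrite ex Lcomb -[RHS]s1; apply: eq_bigr => B _.
  case: (boolP (B \in bases (Ms i))) => hB; last by rewrite off // !mul0r.
  have [v' ev] := (on B).1 (sub _ hB).
  rewrite -ev in hB *; rewrite Lv.
  have vk : s0 k = v' k by apply/esym/eqP; move: (allk v'); rewrite hB /= negbK.
  rewrite /g [ham v' (flip s0 k)]ham_sym ham_flip_same // [ham v' s0]ham_sym.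
  by rewrite -addn1 natrD addrAC subrr add0r mulr1.
by move: Lx1; rewrite Lx0 => /eqP; rewrite eq_sym oner_eq0.
Qed.
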